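(* Let $\mathcal{S}$ be a space of geometric source conditions and $\mathcal{Z}$ the space of molecular configurations, and let $C:\mathcal{S}\times\mathcal{Z}\to\mathcal{Z}$ be a function. Suppose that, for every rigid transformation $G$ (rotations and translations of 3D space, acting on the coordinate parts of configurations and on source conditions), $C$ is invariant in its first argument, i.e. $C(G\mathbf{s},\mathbf{z})=C(\mathbf{s},\mathbf{z})$, and equivariant in its second argument, i.e. $C(\mathbf{s},G\mathbf{z})=G\,C(\mathbf{s},\mathbf{z})$, for all $\mathbf{s}\in\mathcal{S}$, $\mathbf{z}\in\mathcal{Z}$. Define $\mathbf{v}=\mathbf{z}-C(\mathbf{s},\mathbf{z})$. Then the gradient $\nabla_{\mathbf{z}}\lVert\mathbf{v}\rVert_2^2=\nabla_{\mathbf{z}}\lVert\mathbf{z}-C(\mathbf{s},\mathbf{z})\rVert_2^2$ is equivariant to (such rigid) transformations of $\mathbf{z}$.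
   Context: A configuration of $N$ nodes (atoms or residues) is $\mathbf{z}=\{(\mathbf{x}_i,\mathbf{h}_i)\}_{i=1}^N$ with coordinates $\mathbf{x}_i\in\mathbb{R}^3$ and features $\mathbf{h}_i\in\mathbb{R}^d$; $\mathcal{Z}$ denotes the space of such configurations (of varying size $N$), viewed as points of $\mathbb{R}^{N\times(3+d)}$. Rigid transformations $G$ act on configurations by acting on all coordinates $\mathbf{x}_i$ (features unchanged). $\mathcal{S}$ is a general space of geometric objects (e.g. structures, surfaces, point clouds) on which rigid transformations also act. A map $F$ is equivariant to $G$ if $F(G\mathbf{z})=G\,F(\mathbf{z})$ and invariant if $F(G\mathbf{z})=F(\mathbf{z})$. *)

(* Defs.v *)
From HB Require Import structures.
From mathcomp Require Import all_boot all_order all_algebra.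
From mathcomp Require Import all_classical all_reals all_analysis.
Set Implicit Arguments. Unset Strict Implicit. Unset Printing Implicit Defensive.
Import Order.TTheory GRing.Theory Num.Theory.
Import numFieldNormedType.Exports.
Local Open Scope ring_scope.

(* A configuration of N nodes with d-dimensional features is a matrix
   z : 'M[R]_(N, 3 + d) whose i-th row is (x_i, h_i); the left 3 columns are
   the coordinates x_i (a row vector of R^3), the right d columns the
   features h_i. *)
Definition config (R : realType) (N d : nat) := 'M[R]_(N, 3 + d).

Definition is_rotation (R : realType) (Q : 'M[R]_3) : Prop :=
  Q^T *m Q = 1%:M /\ \det Q = 1.

(* Action of the rigid motion G = (Q, t) (x |-> x Q + t on row vectors) on a
   configuration: acts on every coordinate row, features unchanged. *)
Definition rigid_act (R : realType) (N d : nat) (Q : 'M[R]_3) (t : 'rV[R]_3)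
  (z : 'M[R]_(N, 3 + d)) : 'M[R]_(N, 3 + d) :=
  row_mx (lsubmx z *m Q + \matrix_(i < N) t) (rsubmx z).

(* Induced action of G = (Q, t) on vectors tangent to configuration space
   (e.g. gradients): only the linear part Q acts, on the coordinate part. *)
Definition rigid_act_vec (R : realType) (N d : nat) (Q : 'M[R]_3) (t : 'rV[R]_3)
  (v : 'M[R]_(N, 3 + d)) : 'M[R]_(N, 3 + d) :=
  row_mx (lsubmx v *m Q) (rsubmx v).

Definition sqnorm2 (R : realType) (m n : nat) (v : 'M[R]_(m, n)) : R :=
  \sum_(i < m) \sum_(j < n) v i j ^+ 2.

Definition grad (R : realType) (m n : nat) (f : 'M[R]_(m, n) -> R)
  (z : 'M[R]_(m, n)) : 'M[R]_(m, n) :=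
  \matrix_(i < m, j < n) ('D_(delta_mx i j) f z).

(* Main.v *)
Require Import Defs.
From HB Require Import structures.
From mathcomp Require Import all_boot all_order all_algebra.
From mathcomp Require Import all_classical all_reals all_analysis.
Import Order.TTheory GRing.Theory Num.Theory.
Import numFieldNormedType.Exports.
Local Open Scope ring_scope.

Set Implicit Arguments. Unset Strict Implicit.
Section S.
Variable R : realType.

Lemma sqnorm2_diff m n (v : 'M[R]_(m, n)) : differentiable (@sqnorm2 R m n) v.
Proof.
have -> : @sqnorm2 R m n = \sum_(i < m) \sum_(j < n) (fun w : 'M[R]_(m,n) => w i j * w i j).
  apply/funext => w; rewrite /sqnorm2 fct_sumE; apply: eq_bigr => i _.
  by rewrite fct_sumE; apply: eq_bigr => j _; rewrite expr2.
apply: differentiable_sum => i; apply: differentiable_sum => j.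
by apply: differentiableM; apply: differentiable_coord.
Qed.

Definition dot m n (X Y : 'M[R]_(m, n)) := \sum_(i < m) \sum_(j < n) X i j * Y i j.

Lemma dot_tr m n (X Y : 'M[R]_(m, n)) : dot X Y = \tr (X *m Y^T).
Proof.
rewrite /dot /mxtrace; apply: eq_bigr => i _; rewrite mxE; apply: eq_bigr => j _.
by rewrite mxE.
Qed.

Lemma dot_delta m n (Y : 'M[R]_(m, n)) i j : dot (delta_mx i j) Y = Y i j.
Proof.
rewrite /dot (bigD1 i) //=.
have -> : \sum_(k < m | k != i) \sum_(l < n) delta_mx i j k l * Y k l = 0.
  apply: big1 => k kn; apply: big1 => l _.
  by rewrite mxE (negbTE kn) mul0r.
rewrite addr0 (bigD1 j) //=.
have -> : \sum_(l < n | l != j) delta_mx i j i l * Y i l = 0.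
  by apply: big1 => l ln; rewrite mxE (negbTE ln) andbF mul0r.
by rewrite mxE !eqxx mul1r addr0.
Qed.

Lemma dot_lin m n (L : {linear 'M[R]_(m, n) -> R}) X :
  L X = dot X (\matrix_(i, j) L (delta_mx i j)).
Proof.
rewrite {1}(matrix_sum_delta X) linear_sum /dot; apply: eq_bigr => i _.
rewrite linear_sum; apply: eq_bigr => j _; by rewrite linearZ mxE.
Qed.
End S.

Section S2.
Variable R : realType.
Variables (N d : nat) (Q : 'M[R]_3) (t : 'rV[R]_3).
Local Notation A := (rigid_act_vec (d:=d) (N:=N) Q t).
Definition Ainv (v : 'M[R]_(N, 3 + d)) : 'M[R]_(N, 3 + d) :=
  row_mx (lsubmx v *m Q^T) (rsubmx v).

Lemma dot_adj X Y : dot (Ainv X) Y = dot X (A Y).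
Proof.
rewrite !dot_tr /Ainv /rigid_act_vec -{3}(hsubmxK X) -{1}(hsubmxK Y).
by rewrite !tr_row_mx !mul_row_col trmx_mul !mulmxA.
Qed.

Lemma A_Ainv v : Q^T *m Q = 1%:M -> A (Ainv v) = v.
Proof.
move=> H; rewrite /rigid_act_vec /Ainv row_mxKl row_mxKr -mulmxA H mulmx1.
exact: hsubmxK.
Qed.

Lemma Ainv_A v : Q^T *m Q = 1%:M -> Ainv (A v) = v.
Proof.
move=> /mulmx1C H; rewrite /rigid_act_vec /Ainv row_mxKl row_mxKr -mulmxA H mulmx1.
exact: hsubmxK.
Qed.

Lemma sqnorm2_dot m n (v : 'M[R]_(m, n)) : sqnorm2 v = dot v v.
Proof. by rewrite /sqnorm2 /dot; apply: eq_bigr => i _; apply: eq_bigr => j _; rewrite expr2. Qed.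

Lemma sq_A v : Q^T *m Q = 1%:M -> sqnorm2 (A v) = sqnorm2 v.
Proof. by move=> H; rewrite !sqnorm2_dot -dot_adj Ainv_A. Qed.

Lemma act_sub w w' : rigid_act Q t w - rigid_act Q t w' = A (w - w').
Proof.
rewrite /rigid_act /rigid_act_vec opp_row_mx add_row_mx !linearB /=.
by rewrite mulmxBl opprD addrACA subrr addr0.
Qed.

Lemma act_add w h u : rigid_act Q t (h *: u + w) = h *: A u + rigid_act Q t w.
Proof.
rewrite /rigid_act /rigid_act_vec scale_row_mx add_row_mx !linearD !linearZ /=.
by rewrite mulmxDl -scalemxAl addrA.
Qed.
End S2.

Theorem theorem1 (R : realType) (N d : nat) (S : Type)
  (actS : 'M[R]_3 -> 'rV[R]_3 -> S -> S)
  (C : S -> 'M[R]_(N, 3 + d) -> 'M[R]_(N, 3 + d))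
  (C_diff : forall s z, differentiable (C s) z)
  (C_inv : forall Q t, is_rotation Q ->
     forall s z, C (actS Q t s) z = C s z)
  (C_eqv : forall Q t, is_rotation Q ->
     forall s z, C s (rigid_act Q t z) = rigid_act Q t (C s z)) :
  forall Q t, is_rotation Q -> forall s z,
    grad (fun w => sqnorm2 (w - C s w)) (rigid_act Q t z)
    = rigid_act_vec Q t (grad (fun w => sqnorm2 (w - C s w)) z).
Proof.
move=> Q t rotQ s z.
have QQ : Q^T *m Q = 1%:M by case: rotQ.
set f := (fun w => sqnorm2 (w - C s w)).
have key : forall w, f (rigid_act Q t w) = f w.
  by move=> w; rewrite /f C_eqv // act_sub sq_A.
have df : differentiable f z.
  apply: (@differentiable_comp _ _ _ _ (fun w => w - C s w) (@sqnorm2 R _ _)).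
    by apply: differentiableB => //; apply: C_diff.
  exact: sqnorm2_diff.
have Dg : forall v, 'D_v f (rigid_act Q t z) = 'D_(Ainv Q v) f z.
  move=> v; rewrite /derive; f_equal; f_equal; apply/funext => h.
  by rewrite -{1}(A_Ainv t v QQ) /comp /shift /= -act_add !key.
have gz : grad f z = \matrix_(i, j) ('d f z (delta_mx i j)).
  by apply/matrixP => i j; rewrite !mxE deriveE.
apply/matrixP => i j.
rewrite [LHS]mxE Dg deriveE // dot_lin -gz (@dot_adj _ _ _ Q t) dot_delta.
by [].
Qed.
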